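(* Let $$C=\begin{bmatrix}0&-\frac{1+i}{4}&-\frac14&0\\0&0&\frac14&\frac{-1+i}{4}\\0&0&0&\frac14\\0&0&0&0\end{bmatrix}.$$ Then $C$ is nilpotent with $\|C\|<1$, $P_C(x,y)=1-\frac{7}{16}xy+\frac{1}{32}x^2y^2$ (so $C$ has the Circularity property), but $Q_C(x,y)\notin\mathbb{C}[xy]$; hence the associated partial isometry $\mathcal{A}(C)$ does not have the Circularity property.
   Context: $P_C(x,y)=\det(I-xC-yC^* )$, $Q_C(x,y)=\det(I-xC-yC^*-xy(I-C^*C))$; $\mathbb{C}[xy]$ is the set of polynomials in the product $xy$ alone. $H_X(\theta)=\frac12(e^{-i\theta}X+e^{i\theta}X^* )$; $X$ has the Circularity property if the spectrum of $H_X(\theta)$ is independent of $\theta$. For a contraction $C\in M_n$: $D_C=I-C^*C$, $d=\operatorname{rank}D_C$, $B_C$ is a $d\times n$ matrix of full row rank with $B_C^*B_C=D_C$, and $\mathcal{A}(C)=\begin{bmatrix}0&B_C\\0&C\end{bmatrix}$. *)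

(* Defs.v *)
From HB Require Import structures.
From mathcomp Require Import all_boot all_order all_algebra.
From mathcomp Require Import reals trigo.
From mathcomp Require Import complex.
Set Implicit Arguments. Unset Strict Implicit. Unset Printing Implicit Defensive.
Import Order.TTheory GRing.Theory Num.Theory.
Local Open Scope ring_scope.

Section Defs.
Variable R : realType.
Local Notation C := (complex R).

Definition adjmx m n (A : 'M[C]_(m, n)) : 'M[C]_(n, m) := (map_mx Num.conj A)^T.

Definition vnorm2 n (v : 'cV[C]_n) : C := \sum_i `|v i 0| ^+ 2.

(* operator norm ||A|| < 1 : sup_{v<>0} |Av|/|v| < 1, i.e. there is r < 1 with
   |Av| <= r |v| for every v. *)
Definition opnorm_lt1 n (A : 'M[C]_n) : Prop :=
  exists r : R, 0 <= r /\ r < 1 /\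
    forall v : 'cV[C]_n, vnorm2 (A *m v) <= Complex (r ^+ 2) 0 * vnorm2 v.

Definition nilpotent n (A : 'M[C]_n) : Prop := exists k : nat, A ^+ k = 0.

Definition expi (t : R) : C := Complex (cos t) (sin t).

Definition Hmx n (X : 'M[C]_n) (t : R) : 'M[C]_n :=
  (2%:R)^-1 *: (expi (- t) *: X + expi t *: adjmx X).

Definition circularity n (X : 'M[C]_n) : Prop :=
  forall t1 t2 : R, forall l : C,
    eigenvalue (Hmx X t1) l <-> eigenvalue (Hmx X t2) l.

(* bivariate polynomials in x (inner variable) and y (outer variable) *)
Definition polyx : {poly {poly C}} := ('X)%:P.
Definition polyy : {poly {poly C}} := 'X.
Definition cst (c : C) : {poly {poly C}} := c%:P%:P.
Definition liftmx n (A : 'M[C]_n) : 'M[{poly {poly C}}]_n := map_mx cst A.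

Definition P_of n (A : 'M[C]_n) : {poly {poly C}} :=
  \det (1%:M - polyx *: liftmx A - polyy *: liftmx (adjmx A)).

Definition Q_of n (A : 'M[C]_n) : {poly {poly C}} :=
  \det (1%:M - polyx *: liftmx A - polyy *: liftmx (adjmx A)
        - (polyx * polyy) *: liftmx (1%:M - adjmx A *m A)).

Definition in_Cxy (P : {poly {poly C}}) : Prop :=
  exists p : {poly C},
    P = \sum_(i < size p) cst p`_i * (polyx * polyy) ^+ i.

Definition Cmat : 'M[C]_4 :=
  \matrix_(i < 4, j < 4)
    (if (i == 0 :> nat) && (j == 1 :> nat) then - Complex 1 1 / 4%:R
     else if (i == 0 :> nat) && (j == 2 :> nat) then - (4%:R)^-1
     else if (i == 1 :> nat) && (j == 2 :> nat) then (4%:R)^-1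
     else if (i == 1 :> nat) && (j == 3 :> nat) then Complex (-1) 1 / 4%:R
     else if (i == 2 :> nat) && (j == 3 :> nat) then (4%:R)^-1
     else 0).

Definition Amat n d (A : 'M[C]_n) (B : 'M[C]_(d, n)) : 'M[C]_(d + n) :=
  block_mx 0 B 0 A.

End Defs.

(* Main.v *)
Require Import Defs.
From HB Require Import structures.
From mathcomp Require Import all_boot all_order all_algebra.
From mathcomp Require Import reals trigo.
From mathcomp Require Import complex.
From mathcomp Require Import ring lra.
Import Order.TTheory GRing.Theory Num.Theory.
Local Open Scope ring_scope.

Definition D4 {T : comNzRingType} (f : nat -> nat -> T) : T :=
  0 + f 0%N 0%N * f 1%N 1%N * f 2%N 2%N * f 3%N 3%N
    - f 0%N 0%N * f 1%N 1%N * f 2%N 3%N * f 3%N 2%N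
    - f 0%N 0%N * f 1%N 2%N * f 2%N 1%N * f 3%N 3%N
    + f 0%N 0%N * f 1%N 2%N * f 2%N 3%N * f 3%N 1%N
    + f 0%N 0%N * f 1%N 3%N * f 2%N 1%N * f 3%N 2%N
    - f 0%N 0%N * f 1%N 3%N * f 2%N 2%N * f 3%N 1%N
    - f 0%N 1%N * f 1%N 0%N * f 2%N 2%N * f 3%N 3%N
    + f 0%N 1%N * f 1%N 0%N * f 2%N 3%N * f 3%N 2%N
    + f 0%N 1%N * f 1%N 2%N * f 2%N 0%N * f 3%N 3%N
    - f 0%N 1%N * f 1%N 2%N * f 2%N 3%N * f 3%N 0%N
    - f 0%N 1%N * f 1%N 3%N * f 2%N 0%N * f 3%N 2%N
    + f 0%N 1%N * f 1%N 3%N * f 2%N 2%N * f 3%N 0%N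
    + f 0%N 2%N * f 1%N 0%N * f 2%N 1%N * f 3%N 3%N
    - f 0%N 2%N * f 1%N 0%N * f 2%N 3%N * f 3%N 1%N
    - f 0%N 2%N * f 1%N 1%N * f 2%N 0%N * f 3%N 3%N
    + f 0%N 2%N * f 1%N 1%N * f 2%N 3%N * f 3%N 0%N
    + f 0%N 2%N * f 1%N 3%N * f 2%N 0%N * f 3%N 1%N
    - f 0%N 2%N * f 1%N 3%N * f 2%N 1%N * f 3%N 0%N
    - f 0%N 3%N * f 1%N 0%N * f 2%N 1%N * f 3%N 2%N
    + f 0%N 3%N * f 1%N 0%N * f 2%N 2%N * f 3%N 1%N
    + f 0%N 3%N * f 1%N 1%N * f 2%N 0%N * f 3%N 2%N
    - f 0%N 3%N * f 1%N 1%N * f 2%N 2%N * f 3%N 0%N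
    - f 0%N 3%N * f 1%N 2%N * f 2%N 0%N * f 3%N 1%N
    + f 0%N 3%N * f 1%N 2%N * f 2%N 1%N * f 3%N 0%N.

Lemma det4 (T : comNzRingType) (f : nat -> nat -> T) :
  \det (\matrix_(i < 4, j < 4) f i j) = D4 f.
Proof.
rewrite /D4 (expand_det_row _ ord0) !big_ord_recl big_ord0 /cofactor.
rewrite !(expand_det_row _ ord0) !big_ord_recl !big_ord0 /cofactor.
rewrite !(expand_det_row _ ord0) !big_ord_recl !big_ord0 /cofactor.
rewrite !det_mx11 !mxE /= /bump /=. ring.
Qed.


Section Main.
Variable R : realType.
Local Notation C := (complex R).

Definition ce (i j : nat) : C :=
  match i, j with
  | 0, 1 => - (1 + 'i) / 4%:R
  | 0, 2 => - (4%:R)^-1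
  | 1, 2 => (4%:R)^-1
  | 1, 3 => (-1 + 'i) / 4%:R
  | 2, 3 => (4%:R)^-1
  | _, _ => 0
  end.
Definition cs (i j : nat) : C :=
  match i, j with
  | 1, 0 => - (1 - 'i) / 4%:R
  | 2, 0 => - (4%:R)^-1
  | 2, 1 => (4%:R)^-1
  | 3, 1 => (-1 - 'i) / 4%:R
  | 3, 2 => (4%:R)^-1
  | _, _ => 0
  end.
Definition dl (i j : nat) : C := if Nat.eqb i j then 1 else 0.
Definition de (i j : nat) : C :=
  dl i j - (cs i 0 * ce 0 j + cs i 1 * ce 1 j + cs i 2 * ce 2 j + cs i 3 * ce 3 j).
Definition QE (a b : C) : C :=
  1 - 4%:R * (a * b) + 89%:R / 16%:R * (a * b) ^+ 2 - 201%:R / 64%:R * (a * b) ^+ 3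
  + 1247%:R / 2048%:R * (a * b) ^+ 4
  + (1 - 'i) / 1024%:R * (a * b) ^+ 3 * b + (1 + 'i) / 1024%:R * (a * b) ^+ 3 * a.
Lemma N1 (a b : C) :
  D4 (fun i j => dl i j - a * ce i j - b * cs i j) = 1 - 7%:R / 16%:R * (a * b) + (32%:R)^-1 * (a * b) ^+ 2.
Proof.
rewrite /D4 ; cbn [ce cs dl Nat.eqb].
transitivity ((1 - 7%:R / 16%:R * (a * b) + (32%:R)^-1 * (a * b) ^+ 2) + ('i ^+ 2 + 1) * (((1%:R / 8%:R) * a * b) + (- (1%:R / 64%:R) * a ^+ 2 * b ^+ 2)) : C).
  by field.
by rewrite sqrCi addNr mul0r addr0.
Qed.

Lemma N2 (a b l : C) :
  D4 (fun i j => dl i j * l - 2%:R^-1 * (a * ce i j + b * cs i j)) = l ^+ 4 - 7%:R / 64%:R * (a * b) * l ^+ 2 + (512%:R)^-1 * (a * b) ^+ 2.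
Proof.
rewrite /D4 ; cbn [ce cs dl Nat.eqb].
transitivity ((l ^+ 4 - 7%:R / 64%:R * (a * b) * l ^+ 2 + (512%:R)^-1 * (a * b) ^+ 2) + ('i ^+ 2 + 1) * (((1%:R / 32%:R) * a * b * l ^+ 2) + (- (1%:R / 1024%:R) * a ^+ 2 * b ^+ 2)) : C).
  by field.
by rewrite sqrCi addNr mul0r addr0.
Qed.

Lemma N3 (a b : C) :
  D4 (fun i j => dl i j - a * ce i j - b * cs i j - a * b * de i j) = QE a b.
Proof.
rewrite /D4 /de /QE; cbn [ce cs dl Nat.eqb].
transitivity ((1 - 4%:R * (a * b) + 89%:R / 16%:R * (a * b) ^+ 2 - 201%:R / 64%:R * (a * b) ^+ 3 + 1247%:R / 2048%:R * (a * b) ^+ 4 + (1 - 'i) / 1024%:R * (a * b) ^+ 3 * b + (1 + 'i) / 1024%:R * (a * b) ^+ 3 * a) + ('i ^+ 2 + 1) * (((1%:R / 8%:R) * a ^+ 2 * b ^+ 2) + (- (31%:R / 128%:R) * a ^+ 3 * b ^+ 3) + (- (1%:R / 256%:R) * a ^+ 3 * b ^+ 3 * 'i ^+ 2) + (- (1%:R / 1024%:R) * a ^+ 3 * b ^+ 4) + ((1%:R / 1024%:R) * a ^+ 3 * b ^+ 4 * 'i) + (- (1%:R / 1024%:R) * a ^+ 4 * b ^+ 3) + (- (1%:R / 1024%:R) * a ^+ 4 * b ^+ 3 * 'i) + ((417%:R / 4096%:R) * a ^+ 4 * b ^+ 4) + ((1%:R / 256%:R) * a ^+ 4 * b ^+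 4 * 'i ^+ 2)) : C).
  by field.
by rewrite sqrCi addNr mul0r addr0.
Qed.
Lemma c11 : Complex 1 1 = 1 + 'i :> C.
Proof. by apply/eqP; rewrite eq_complex /= ?oppr0 ?addr0 ?add0r !eqxx. Qed.
Lemma cm11 : Complex (-1) 1 = -1 + 'i :> C.
Proof. by apply/eqP; rewrite eq_complex /= ?oppr0 ?addr0 ?add0r !eqxx. Qed.

Lemma conji : Num.conj (Complex 0 1 : C) = - Complex 0 1.
Proof. by apply/eqP; rewrite eq_complex /= ?oppr0 !eqxx. Qed.

Lemma conjCi' : (Num.conj : {rmorphism C -> C}) 'i = -'i.
Proof. exact: conjCi. Qed.
Lemma cj1 : Num.conj (- (1 + 'i) / 4%:R : C) = - (1 - 'i) / 4%:R.
Proof. by rewrite fmorph_div rmorphN rmorphD rmorph1 rmorph_nat conjCi'. Qed.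
Lemma cj2 : Num.conj ((-1 + 'i) / 4%:R : C) = (-1 - 'i) / 4%:R.
Proof. by rewrite fmorph_div rmorphD rmorphN rmorph1 rmorph_nat conjCi'. Qed.
Lemma cj3 : Num.conj ((4%:R)^-1 : C) = (4%:R)^-1.
Proof. by rewrite fmorphV rmorph_nat. Qed.
Lemma cj4 : Num.conj (- (4%:R)^-1 : C) = - (4%:R)^-1.
Proof. by rewrite rmorphN fmorphV rmorph_nat. Qed.

Lemma CmatE : Cmat R = \matrix_(i < 4, j < 4) ce i j.
Proof.
apply/matrixP => -[[|[|[|[|i]]]] Hi] -[[|[|[|[|j]]]] Hj] //; rewrite !mxE /=;
  by rewrite ?c11 ?cm11.
Qed.

Lemma adjE : adjmx (Cmat R) = \matrix_(i < 4, j < 4) cs i j.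
Proof.
rewrite /adjmx CmatE.
apply/matrixP => -[[|[|[|[|i]]]] Hi] -[[|[|[|[|j]]]] Hj] //; rewrite !mxE; cbn [ce cs nat_of_ord];
  by rewrite ?cj1 ?cj2 ?cj3 ?cj4 ?rmorph0.
Qed.

Lemma DmatE : 1%:M - adjmx (Cmat R) *m Cmat R = \matrix_(i < 4, j < 4) de i j.
Proof.
rewrite adjE CmatE.
apply/matrixP => -[[|[|[|[|i]]]] Hi] -[[|[|[|[|j]]]] Hj] //;
  rewrite !mxE !big_ord_recl big_ord0 !mxE /de /bump /=; ring.
Qed.
End Main.

Arguments ce {R} i j.
Arguments cs {R} i j.
Arguments dl {R} i j.
Arguments de {R} i j.
Arguments QE {R} a b.

Section Main3.
Variable R : realType.
Local Notation C := (complex R).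
Local Notation Cm := (Cmat R).

Lemma dlE (i j : nat) : dl i j = (i == j)%:R :> C.
Proof.
rewrite /dl.
have -> : Nat.eqb i j = (i == j) by elim: i j => [|i IH] [|j] //=; rewrite IH.
by case: (i == j).
Qed.

Lemma detN1 (a b : C) :
  \det (1%:M - a *: Cm - b *: adjmx Cm) = 1 - 7%:R / 16%:R * (a * b) + (32%:R)^-1 * (a * b) ^+ 2.
Proof.
rewrite adjE CmatE -(N1 R a b) -det4; congr (\det _).
by apply/matrixP => i j; rewrite !mxE dlE.
Qed.

Lemma detN2 (a b l : C) :
  \det (l%:M - 2%:R^-1 *: (a *: Cm + b *: adjmx Cm)) =
  l ^+ 4 - 7%:R / 64%:R * (a * b) * l ^+ 2 + (512%:R)^-1 * (a * b) ^+ 2.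
Proof.
rewrite adjE CmatE -(N2 R a b l) -det4; congr (\det _).
by apply/matrixP => i j; rewrite !mxE dlE mulr_natl.
Qed.

Lemma detN3 (a b : C) :
  \det (1%:M - a *: Cm - b *: adjmx Cm - (a * b) *: (1%:M - adjmx Cm *m Cm)) = QE a b.
Proof.
rewrite DmatE adjE CmatE -(N3 R a b) -det4; congr (\det _).
by apply/matrixP => i j; rewrite !mxE dlE.
Qed.
End Main3.

Section Main4.
Variable R : realType.
Local Notation C := (complex R).
Local Notation Cm := (Cmat R).

Lemma eigP n (A : 'M[C]_n) l : eigenvalue A l <-> \det (l%:M - A) = 0.
Proof.
rewrite eigenvalue_root_char /root /char_poly.
have -> : (\det (char_poly_mx A)).[l] = \det (l%:M - A).
  rewrite -horner_evalE -det_map_mx; congr (\det _).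
  apply/matrixP => i j; rewrite !mxE /= horner_evalE hornerD hornerN hornerMn hornerX hornerC.
  done.
by split => /eqP.
Qed.

Lemma expiNM (t : R) : expi (- t) * expi t = 1 :> C.
Proof.
rewrite /expi; apply/eqP; rewrite eq_complex /= cosN sinN; apply/andP; split; apply/eqP.
  by rewrite mulNr opprK -!expr2 cos2Dsin2.
by rewrite mulNr mulrC subrr.
Qed.

Lemma expi0 : expi 0 = 1 :> C.
Proof. by rewrite /expi cos0 sin0. Qed.

Lemma expipi : expi pi = -1 :> C.
Proof. by apply/eqP; rewrite /expi cospi sinpi eq_complex /= oppr0 !eqxx. Qed.

Lemma detH (t : R) (l : C) : \det (l%:M - Hmx Cm t) = l ^+ 4 - 7%:R / 64%:R * l ^+ 2 + (512%:R)^-1.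
Proof.
have := N2 R (expi (-t)) (expi t) l; rewrite expiNM expr1n !mulr1 => <-.
rewrite -det4 /Hmx adjE CmatE; congr (\det _); apply/matrixP => i j; by rewrite !mxE dlE mulr_natl.
Qed.

Lemma circC : circularity Cm.
Proof.
move=> t1 t2 l.
have h1 := eigP 4 (Hmx Cm t1) l.
have h2 := eigP 4 (Hmx Cm t2) l.
rewrite detH in h1; rewrite detH in h2.
split => H; [apply (proj2 h2); apply (proj1 h1) | apply (proj2 h1); apply (proj1 h2)]; exact H.
Qed.

Lemma upper_pow (n : nat) (A : 'M[C]_n.+1) :
  (forall i j : 'I_n.+1, (j <= i)%N -> A i j = 0) ->
  forall k (i j : 'I_n.+1), (j < i + k)%N -> (A ^+ k) i j = 0.
Proof.
move=> HA; elim=> [|k IH] i j hij.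
  have hne : i != j by apply/eqP => e; move: hij; rewrite e addn0 ltnn.
  by rewrite expr0 mxE (negbTE hne) mulr0n.
rewrite exprSr -mulmxE mxE big1 // => m _.
case: (ltnP m (i + k)) => h; first by rewrite IH // mul0r.
rewrite HA ?mulr0 //; apply: leq_trans h; by rewrite -ltnS -addnS.
Qed.

Lemma nilC : nilpotent Cm.
Proof.
exists 4%N; apply/matrixP => i j; rewrite [RHS]mxE upper_pow //; last first.
  by apply: leq_trans (ltn_ord j) _; rewrite leq_addl.
rewrite CmatE => -[[|[|[|[|i']]]] Hi] -[[|[|[|[|j']]]] Hj] //= _; by rewrite mxE.
Qed.
End Main4.

Section Main5.
Variable R : realType.
Local Notation C := (complex R).
Local Notation Cm := (Cmat R).
Local Notation PP := ({poly {poly C}}).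

Definition ev (a b : C) : {rmorphism PP -> C} := horner_eval b \o map_poly (horner_eval a).

Lemma ev_det (a b : C) n (M : 'M[PP]_n) : ev a b (\det M) = \det (map_mx (ev a b) M).
Proof. by rewrite det_map_mx. Qed.

Lemma ev_cst a b c : ev a b (cst c) = c.
Proof. by rewrite /cst /= map_polyC /= !horner_evalE !hornerC. Qed.
Lemma ev_x a b : ev a b (polyx R) = a.
Proof. by rewrite /polyx /= map_polyC /= !horner_evalE hornerC hornerX. Qed.
Lemma ev_y a b : ev a b (polyy R) = b.
Proof. by rewrite /polyy /= map_polyX horner_evalE hornerX. Qed.

Lemma ev_B a b (p q : PP) : ev a b (p - q) = ev a b p - ev a b q.
Proof. by rewrite rmorphB. Qed.

Lemma poly_ext0 (p : {poly C}) : (forall x, p.[x] = 0) -> p = 0.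
Proof.
move=> H; apply/eqP; apply: contraT => nz.
have := max_poly_roots nz (rs := [seq i%:R | i <- iota 0 (size p)]).
rewrite size_map size_iota ltnn; apply.
  by apply/allP => x /mapP [i _ ->]; rewrite /root H.
rewrite map_inj_uniq ?iota_uniq // => i j /eqP; rewrite eqr_nat => /eqP //.
Qed.

Lemma poly2_ext (p q : PP) : (forall a b, ev a b p = ev a b q) -> p = q.
Proof.
move=> H; apply/eqP; rewrite -subr_eq0; apply/eqP.
have Hr : forall a b, ev a b (p - q) = 0 by move=> a b; rewrite rmorphB H subrr.
apply/polyP => j; rewrite coef0; apply: poly_ext0 => a.
have : map_poly (horner_eval a) (p - q) = 0.
  by apply: poly_ext0 => b; have := Hr a b; rewrite /= horner_evalE.
by move/(congr1 (fun s : {poly C} => s`_j)); rewrite coef_map coef0 /= horner_evalE.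
Qed.

Lemma evP n a b (A A' : 'M[C]_n) :
  map_mx (ev a b) (1%:M - polyx R *: liftmx A - polyy R *: liftmx A')
  = 1%:M - a *: A - b *: A'.
Proof.
apply/matrixP => i j; rewrite !mxE !(rmorphB (ev a b)) !(rmorphM (ev a b)) (rmorph_nat (ev a b)).
by rewrite ev_x ev_y !ev_cst.
Qed.

Lemma evQ n a b (A A' D : 'M[C]_n) :
  map_mx (ev a b) (1%:M - polyx R *: liftmx A - polyy R *: liftmx A'
      - (polyx R * polyy R) *: liftmx D)
  = 1%:M - a *: A - b *: A' - (a * b) *: D.
Proof.
apply/matrixP => i j; rewrite !mxE !(rmorphB (ev a b)) !(rmorphM (ev a b)) (rmorph_nat (ev a b)).
by rewrite ev_x ev_y !ev_cst.
Qed.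

Lemma P_eq : P_of Cm =
    1 - cst (7%:R / 16%:R) * (polyx R * polyy R)
      + cst (32%:R)^-1 * (polyx R * polyy R) ^+ 2.
Proof.
apply: poly2_ext => a b.
rewrite /P_of ev_det evP detN1 (rmorphD (ev a b)) (rmorphB (ev a b)) (rmorph1 (ev a b)).
by rewrite !(rmorphM (ev a b)) !ev_cst !ev_x !ev_y expr2.
Qed.

Lemma QE_ev a b : ev a b (Q_of Cm) = QE a b.
Proof. by rewrite /Q_of ev_det evQ detN3. Qed.

Lemma QE12 : QE 1 2%:R - QE 2%:R 1 = - ('i / 64%:R) :> C.
Proof. rewrite /QE. by field. Qed.

Lemma notCxy : ~ in_Cxy (Q_of Cm).
Proof.
move=> [p Hp].
have E : forall a b, QE a b = \sum_(i < size p) p`_i * (a * b) ^+ i.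
  move=> a b; rewrite -QE_ev Hp (rmorph_sum (ev a b)); apply: eq_bigr => i _.
  by rewrite (rmorphM (ev a b)) (rmorphXn (ev a b)) (rmorphM (ev a b)) ev_cst ev_x ev_y.
have := QE12; rewrite (E 1) (E 2%:R) mulrC subrr => /eqP.
by rewrite eq_sym oppr_eq0 mulf_eq0 invr_eq0 pnatr_eq0 orbF (negbTE (neq0Ci _)).
Qed.
End Main5.

Section Main6.
Variable R : realType.
Local Notation C := (complex R).
Local Notation Cm := (Cmat R).
Variables (d : nat) (B : 'M[C]_(d, 4)).
Hypothesis hB : adjmx B *m B = 1%:M - adjmx Cm *m Cm.

Local Notation M := (block_mx (0 : 'M[C]_d) B (adjmx B) (Cm + adjmx Cm)).

Lemma adj_block : adjmx (Amat Cm B) = block_mx 0 0 (adjmx B) (adjmx Cm).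
Proof.
rewrite /Amat /adjmx map_block_mx tr_block_mx; congr block_mx;
  by apply/matrixP => i j; rewrite !mxE conjC0.
Qed.

Lemma AM : Amat Cm B + adjmx (Amat Cm B) = M.
Proof. by rewrite adj_block /Amat add_block_mx !addr0 add0r. Qed.

Lemma detS (mu : C) : mu != 0 ->
  \det (mu%:M - M) = mu ^+ (d + 4) * QE mu^-1 mu^-1.
Proof.
move=> mu0.
have E : mu%:M - M = block_mx 1 0 (- mu^-1 *: adjmx B) 1 *m
   block_mx (mu%:M) (- B) 0 (mu *: (1%:M - mu^-1 *: Cm - mu^-1 *: adjmx Cm
        - (mu^-1 * mu^-1) *: (1%:M - adjmx Cm *m Cm))).
  rewrite mulmx_block (scalar_mx_block d 4) opp_block_mx add_block_mx.
  rewrite !mul1mx !mul0mx !addr0.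
  congr block_mx.
  - by rewrite subr0.
  - by rewrite sub0r.
  - by rewrite sub0r mul_mx_scalar scalerA mulrN mulfV // scaleN1r.
  rewrite -scalemxAl mulmxN scalerN scaleNr opprK hB !scalerBr !scalerA mulrA !mulfV //.
  by rewrite mul1r !scale1r !scalemx1 [RHS]addrC subrK opprD addrA.
rewrite E det_mulmx det_lblock det_ublock !det1 !mul1r det_scalar detZ detN3.
by rewrite exprD mulrA.
Qed.


Lemma HA0 : Hmx (Amat Cm B) 0 = 2%:R^-1 *: M.
Proof. by rewrite /Hmx oppr0 expi0 !scale1r AM. Qed.

Lemma expiNpi : expi (- pi) = -1 :> C.
Proof. by apply/eqP; rewrite /expi cosN sinN cospi sinpi eq_complex /= !oppr0 !eqxx. Qed.

Lemma HApi : Hmx (Amat Cm B) pi = - (2%:R^-1 *: M).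
Proof. by rewrite /Hmx expiNpi expipi !scaleN1r -opprD AM scalerN. Qed.

Lemma eigM (l : C) : eigenvalue (2%:R^-1 *: M) l <-> \det ((2%:R * l)%:M - M) = 0.
Proof.
have h := eigP R (d + 4)%N (2%:R^-1 *: M) l.
have E : l%:M - 2%:R^-1 *: M = 2%:R^-1 *: ((2%:R * l)%:M - M).
  by rewrite scalerBr scale_scalar_mx mulrA mulVf ?pnatr_eq0 // mul1r.
rewrite E detZ in h.
have nz : (2%:R^-1 : C) ^+ (d + 4) != 0 by rewrite expf_neq0 // invr_eq0 pnatr_eq0.
split => H.
  have := proj1 h H; move/eqP; rewrite mulf_eq0 (negbTE nz) /=; exact/eqP.
by apply (proj2 h); rewrite H mulr0.
Qed.

Lemma eigMN (l : C) : eigenvalue (- (2%:R^-1 *: M)) l <-> \det ((- (2%:R * l))%:M - M) = 0.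
Proof.
have h := eigP R (d + 4)%N (- (2%:R^-1 *: M)) l.
have E : l%:M - - (2%:R^-1 *: M) = (- 2%:R^-1) *: ((- (2%:R * l))%:M - M).
  by rewrite scalerBr scale_scalar_mx mulrNN mulrA mulVf ?pnatr_eq0 // mul1r scaleNr opprK.
rewrite E detZ in h.
have nz : (- 2%:R^-1 : C) ^+ (d + 4) != 0 by rewrite expf_neq0 // oppr_eq0 invr_eq0 pnatr_eq0.
split => H.
  have := proj1 h H; move/eqP; rewrite mulf_eq0 (negbTE nz) /=; exact/eqP.
by apply (proj2 h); rewrite H mulr0.
Qed.

Definition Pc (i : nat) : C :=
  match i with
  | 0 => - (2048%:R / 1247%:R)
  | 2 => 4%:R * (2048%:R / 1247%:R)
  | 4 => - (89%:R / 16%:R * (2048%:R / 1247%:R))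
  | 6 => 201%:R / 64%:R * (2048%:R / 1247%:R)
  | 7 => - ((512%:R)^-1 * (2048%:R / 1247%:R))
  | _ => 0
  end.

Lemma QE_root : exists s : C, QE s s = 0.
Proof.
have [x hx] := @solve_monicpoly C 8 Pc isT.
exists x.
have -> : QE x x = 1247%:R / 2048%:R * (x ^+ 8 - \sum_(i < 8) Pc i * x ^+ i).
  rewrite !big_ord_recl big_ord0 /bump /=. rewrite /QE. by field.
by rewrite hx subrr mulr0.
Qed.

Lemma notcircA : ~ circularity (Amat Cm B).
Proof.
move=> circ.
have [s hs] := QE_root.
have s0 : s != 0.
  apply/eqP => e; move: hs; rewrite e (_ : QE 0 0 = 1).
    by move/eqP; rewrite oner_eq0.
  by rewrite /QE; field.
set mu := s^-1.
have mu0 : mu != 0 by rewrite invr_eq0.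
set l := 2%:R^-1 * mu.
have e2 : 2%:R * l = mu by rewrite /l mulrA mulfV ?pnatr_eq0 // mul1r.
have e0 : eigenvalue (Hmx (Amat Cm B) 0) l.
  rewrite HA0; apply (proj2 (eigM l)); rewrite e2 detS // invrK hs mulr0 //.
have epi := proj1 (circ 0 pi l) e0.
rewrite HApi in epi.
have := proj1 (eigMN l) epi.
rewrite e2 detS ?oppr_eq0 // invrN invrK.
have -> : QE (- s) (- s) = QE s s - s ^+ 7 / 256%:R by rewrite /QE; field.
rewrite hs sub0r => /eqP; rewrite mulf_eq0 expf_eq0 oppr_eq0 (negbTE mu0) andbF /=.
by rewrite oppr_eq0 mulf_eq0 invr_eq0 pnatr_eq0 orbF expf_eq0 (negbTE s0) andbF.
Qed.
End Main6.

Section Main7.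
Variable R : realType.
Local Notation C := (complex R).
Local Notation Cm := (Cmat R).

Definition Tsos (g : nat -> C) : C :=
  9%:R / 16%:R * `|g 0%N| ^+ 2 + 5%:R / 16%:R * `|g 1%N| ^+ 2 + 5%:R / 16%:R * `|g 2%N| ^+ 2
  + 4%:R^-1 * `|g 3%N| ^+ 2
  + `|- (1 + 'i) / 4%:R * g 1%N - - (4%:R)^-1 * g 2%N| ^+ 2
  + `|(4%:R)^-1 * g 2%N - (-1 + 'i) / 4%:R * g 3%N| ^+ 2.

Lemma key_gen (f : {rmorphism C -> C}) (g : nat -> C) :
  f 'i = - 'i -> (forall z : C, `|z| ^+ 2 = z * f z) ->
  9%:R / 16%:R * (\sum_(k < 4) `|g k| ^+ 2)
   - \sum_(i < 4) `|\sum_(k < 4) ce i k * g k| ^+ 2 = Tsos g.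
Proof.
move=> fi hn.
rewrite /Tsos !big_ord_recl !big_ord0 /=; rewrite /bump /=.
rewrite !hn.
do 3 rewrite ?(rmorphD f) ?(rmorphM f) ?(rmorphB f) ?(rmorphN f) ?(fmorph_div f) ?(fmorphV f) ?(rmorph_nat f) ?(rmorph1 f) ?(rmorph0 f) ?fi.
rewrite !add1n.
apply/eqP; rewrite -subr_eq0; apply/eqP.
transitivity (('i ^+ 2 + 1) * (8%:R^-1 * (g 1%N * f (g 1%N) + g 3%N * f (g 3%N))) : C).
  by field.
by rewrite sqrCi addNr mul0r.
Qed.

Lemma opnC : opnorm_lt1 Cm.
Proof.
exists (3%:R / 4%:R); split; first by rewrite divr_ge0 // ler0n.
split; first by lra.
move=> v.
pose g k := v (inord k) 0.
have e1 : vnorm2 v = \sum_(k < 4) `|g k| ^+ 2.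
  by apply: eq_bigr => k _; rewrite /g inord_val.
have e2 : vnorm2 (Cm *m v) = \sum_(i < 4) `|\sum_(k < 4) ce i k * g k| ^+ 2.
  apply: eq_bigr => i _; rewrite mxE CmatE; congr (`|_| ^+ 2).
  by apply: eq_bigr => k _; rewrite mxE /g inord_val.
have hc : Complex ((3%:R / 4%:R) ^+ 2) 0 = 9%:R / 16%:R :> C.
  change ((((3%:R / 4%:R) ^+ 2)%:C)%C = 9%:R / 16%:R :> C).
  rewrite rmorphXn fmorph_div !rmorph_nat; by field.
rewrite hc -subr_ge0 e1 e2 (key_gen (Num.conj : {rmorphism C -> C}) g (conjCi' R) (fun z => normCK z)).
by rewrite /Tsos !addr_ge0 ?mulr_ge0 ?exprn_ge0 ?normr_ge0 ?divr_ge0 ?invr_ge0 ?ler0n.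
Qed.
End Main7.


Theorem mainTheorem12 (R : realType) :
  nilpotent (Cmat R) /\
  opnorm_lt1 (Cmat R) /\
  P_of (Cmat R) =
    1 - cst (7%:R / 16%:R) * (polyx R * polyy R)
      + cst (32%:R)^-1 * (polyx R * polyy R) ^+ 2 /\
  circularity (Cmat R) /\
  ~ in_Cxy (Q_of (Cmat R)) /\
  (forall (d : nat) (B : 'M[complex R]_(d, 4)),
     row_free B -> adjmx B *m B = 1%:M - adjmx (Cmat R) *m Cmat R ->
     ~ circularity (Amat (Cmat R) B)).
Proof.
split; first exact: (nilC R).
split; first exact: (opnC R).
split; first exact: (P_eq R).
split; first exact: (circC R).
split; first exact: (notCxy R).
move=> d B _ hB; exact: (@notcircA R d B hB).
Qed.
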